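(* Let $P$ be a finite graded poset of rank $n$ with $\hat0$ and $\hat1$ admitting an $S_n$ EL-labeling, and let $\chi_P$ be the character of the representation of $\mathcal{H}_n(0)$ on $\mathbb{C}\mathcal{M}(P)$ in which $T_i$ acts as $-U_i$. Then $\omega F_P(x)=\mathrm{ch}(\chi_P)$.
   Context: $P$ finite graded of rank $n$ with $\hat0,\hat1$; $\mathcal{M}(P)$ its maximal chains; $\mathrm{rk}$ its rank function, $\mathrm{rk}(x,y)=\mathrm{rk}(y)-\mathrm{rk}(x)$. An $S_n$ EL-labeling is an edge-labeling $\lambda$ of the covering pairs of $P$ such that every interval $[s,t]$ has exactly one maximal chain with weakly increasing labels (bottom to top), whose label sequence is lexicographically smallest among maximal chains of $[s,t]$, and such that the labels $\omega_{\mathfrak m}=(\lambda(x_0,x_1),\dots,\lambda(x_{n-1},x_n))$ along every maximal chain $\mathfrak m:\hat0=x_0<\cdots<x_n=\hat1$ form a permutation of $[n]$. For $i\in[n-1]$, $U_i(\mathfrak m)$ is the unique maximal chain agreeing with $\mathfrak m$ except possibly at rank $i$ and whose label permutation has no descent at $i$; these satisfy the defining relations of $\mathcal{H}_n(0)$ with $T_i=-U_i$ (where $\mathcal{H}_n(0)$ is generated by $T_1,\dots,T_{n-1}$ with $T_i^2=-T_i$, $T_iT_j=T_jT_i$ for $|i-j|\ge2$, $T_iT_{i+1}T_i=T_{i+1}T_iT_{i+1}$). Ehrenborg's flag quasisymmetric function is $F_P(x)=\sum x_1^{\mathrm{rk}(t_0,t_1)}x_2^{\mathrm{rk}(t_1,t_2)}\cdots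 x_k^{\mathrm{rk}(t_{k-1},t_k)}$, summed over all multichains $\hat0=t_0\le t_1\le\cdots\le t_{k-1}<t_k=\hat1$ (all $k\ge1$). For $S\subseteq[n-1]$, Gessel's fundamental quasisymmetric function is $L_{S,n}(x)=\sum x_{i_1}\cdots x_{i_n}$ over $1\le i_1\le\cdots\le i_n$ with $i_j<i_{j+1}$ whenever $j\in S$. The involution $\omega$ on quasisymmetric functions of degree $n$ is the linear map with $\omega(L_{S,n})=L_{[n-1]\setminus S,n}$. For $S\subseteq[n-1]$, $\chi_S$ is the character of the one-dimensional representation of $\mathcal{H}_n(0)$ with $T_i\mapsto -1$ if $i\in S$ and $T_i\mapsto 0$ otherwise; the characteristic is the linear map with $\mathrm{ch}(\chi_S)=L_{S,n}$, extended linearly to characters written as combinations $\sum_S c_S\chi_S$. *)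

(* Defs.v *)
From HB Require Import structures.
From mathcomp Require Import all_boot all_order all_algebra all_field.
From mathcomp Require Import mpoly.
Set Implicit Arguments. Unset Strict Implicit. Unset Printing Implicit Defensive.
Import Order.TTheory GRing.Theory Num.Theory.
Local Open Scope order_scope.

Section Poset.
Variables (d : Order.disp_t) (P : finTBPOrderType d).

Definition covers (x y : P) : bool :=
  (x < y) && [forall z : P, ~~ ((x < z) && (z < y))].

Definition graded_rank (rk : P -> nat) (n : nat) : Prop :=
  [/\ rk \bot = 0%N, rk \top = n &
      forall x y : P, covers x y -> rk y = (rk x).+1].

(* maximal chains of [s,t], as s :: c *)
Definition is_mchain (s t : P) (c : seq P) : bool :=
  path covers s c && (last s c == t).

Definition labels (lam : P -> P -> nat) (s : P) (c : seq P) : seq nat :=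
  pairmap lam s c.

Fixpoint lexle (a b : seq nat) : bool :=
  match a, b with
  | [::], _ => true
  | _ :: _, [::] => false
  | x :: a', y :: b' => (x < y)%N || ((x == y) && lexle a' b')
  end.

Definition SnEL (n : nat) (lam : P -> P -> nat) : Prop :=
  (forall s t : P, s <= t ->
     exists c : seq P,
       [/\ is_mchain s t c, sorted leq (labels lam s c),
           (forall c', is_mchain s t c' -> sorted leq (labels lam s c') -> c' = c)
         & (forall c', is_mchain s t c' -> lexle (labels lam s c) (labels lam s c'))])
  /\ (forall c, is_mchain \bot \top c -> perm_eq (labels lam \bot c) (iota 1 n)).

Definition maxchainb (n : nat) (m : n.+1.-tuple P) : bool :=
  [&& tnth m ord0 == \bot, tnth m ord_max == \top &
      [forall j : 'I_n, covers (tnth m (widen_ord (leqnSn n) j)) (tnth m (lift ord0 j))]].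

Definition mchain (n : nat) := {m : n.+1.-tuple P | maxchainb m}.

Definition mlab (n : nat) (lam : P -> P -> nat) (m : mchain n) (j : 'I_n) : nat :=
  lam (tnth (val m) (widen_ord (leqnSn n) j)) (tnth (val m) (lift ord0 j)).

(* Index i : 'I_n.-1 stands for i+1 in [n-1]. *)
Definition agree_except (n : nat) (i : 'I_n.-1) (m m' : mchain n) : bool :=
  [forall j : 'I_n.+1, (val j != i.+1) ==> (tnth (val m) j == tnth (val m') j)].

Definition has_descent (n : nat) (lam : P -> P -> nat) (i : 'I_n.-1) (m : mchain n) : bool :=
  (nth 0 [seq mlab lam m j | j <- enum 'I_n] i >
   nth 0 [seq mlab lam m j | j <- enum 'I_n] i.+1)%N.

(* U_{i+1}(m): the unique maximal chain agreeing with m except possibly at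
   rank i+1 with no descent at i+1 (default m, never used under SnEL). *)
Definition Uop (n : nat) (lam : P -> P -> nat) (i : 'I_n.-1) (m : mchain n) : mchain n :=
  odflt m [pick m' | agree_except i m m' && ~~ has_descent lam i m'].

Local Open Scope ring_scope.

(* Matrix of T_{i+1} = -U_{i+1} on C M(P) (basis indexed via enum_val) *)
Definition Tmx (n : nat) (lam : P -> P -> nat) (i : 'I_n.-1) : 'M[algC]_#|{: mchain n}| :=
  \matrix_(a, b) (if Uop lam i (enum_val b) == enum_val a then -1 else 0).

Definition repW (n : nat) (lam : P -> P -> nat) (w : seq 'I_n.-1) : 'M[algC]_#|{: mchain n}| :=
  foldr (fun i A => Tmx lam i *m A) 1%:M w.

(* Ehrenborg's flag quasisymmetric function, truncated to x_1..x_N *)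
Definition multichainb (k : nat) (t : {ffun 'I_k.+1 -> P}) : bool :=
  [&& t ord0 == \bot, t ord_max == \top,
      [forall j : 'I_k, (t (widen_ord (leqnSn k) j) <= t (lift ord0 j))%O] &
      (t (inord k.-1) < t ord_max)%O].

Definition varidx (N : nat) (k : 'I_N.+1) (j : 'I_k) : 'I_N :=
  Ordinal (leq_trans (ltn_ord j) (ltn_ord k : (k <= N)%N)).

Definition FPtrunc (rk : P -> nat) (N : nat) : {mpoly algC[N]} :=
  \sum_(k < N.+1 | (0 < k)%N)
    \sum_(t : {ffun 'I_k.+1 -> P} | multichainb t)
      \prod_(j < k) ('X_(varidx j) ^+ (rk (t (lift ord0 j)) - rk (t (widen_ord (leqnSn k) j)))%N).

End Poset.

Local Open Scope ring_scope.

(* Gessel's fundamental quasisymmetric function L_{S,n}, truncated to x_1..x_N;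
   S : {set 'I_n.-1}, where i stands for i+1 in [n-1]. *)
Definition Ltrunc (n N : nat) (S : {set 'I_n.-1}) : {mpoly algC[N]} :=
  \sum_(f : {ffun 'I_n -> 'I_N} |
          [forall j : 'I_n, forall j' : 'I_n,
             (val j' == (val j).+1) ==>
             (if [exists i in S, val i == val j] then (f j < f j')%N
              else (f j <= f j')%N)])
    \prod_(j < n) 'X_(f j).

Arguments Ltrunc n N S : clear implicits.

(* chi_S evaluated on T_{w_1}...T_{w_k} *)
Definition chiS (n : nat) (S : {set 'I_n.-1}) (w : seq 'I_n.-1) : algC :=
  \prod_(i <- w) (if i \in S then -1 else 0).

(* Main.v *)
Require Import Defs.
From HB Require Import structures.
From mathcomp Require Import all_boot all_order all_algebra all_field.
From mathcomp Require Import mpoly.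
From mathcomp Require Import zify.
Import Order.TTheory GRing.Theory Num.Theory.
Set Implicit Arguments. Unset Strict Implicit. Unset Printing Implicit Defensive.


Lemma prefix_count (q : pred nat) k :
  (forall r r', (r' <= r)%N -> (r < k)%N -> q r -> q r') ->
  forall r, (r < k)%N -> q r = (r < count q (iota 0 k))%N.
Proof.
elim: k => [|k IH] H r hr //.
rewrite -[k.+1]addn1 iotaD count_cat /= add0n addn0.
have H' : forall r r', (r' <= r)%N -> (r < k)%N -> q r -> q r'.
  by move=> a b h1 h2; apply: H => //; lia.
case hk: (q k) => /=.
  have ca : count q (iota 0 k) = k.
    rewrite -[in RHS](size_iota 0 k) -count_predT; apply: eq_in_count => x.
    rewrite mem_iota => /andP[_ hx] /=; apply: (H k) => //; lia.
  rewrite ca addn1 ltnS in hr *; rewrite hr; apply: (H k) => //; lia.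
rewrite addn0.
have hc := count_size q (iota 0 k); rewrite size_iota in hc.
move: hr; rewrite ltnS leq_eqVlt => /orP[/eqP ->|hr]; first by rewrite hk; lia.
exact: IH.
Qed.

Lemma count_lt_iota p k : (p <= k)%N -> count (fun r => r < p)%N (iota 0 k) = p.
Proof.
elim: k p => [|k IH] p hp; first by move: hp; rewrite leqn0 => /eqP ->.
have e : iota 1 k = [seq 1 + r | r <- iota 0 k]%N := iotaDl 1 0 k.
rewrite /= e count_map.
case: p hp => [|p] hp /=.
  by rewrite (eq_count (a2 := pred0)) ?count_pred0.
rewrite (eq_count (a2 := fun r => (r < p)%N)) ?IH //.
Qed.


Lemma sum_by_scale (V : lmodType algC) (T S : finType) (h : T -> S) (G : S -> V) :
  (\sum_(m : T) G (h m) = \sum_(s : S) (#|[set m | h m == s]|)%:R *: G s)%R.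
Proof.
rewrite (partition_big h predT) //=; apply: eq_bigr => s _.
rewrite (eq_bigr (fun _ => G s)); last by move=> m /eqP ->.
have -> : #|[set m | h m == s]| = #|[pred m | h m == s]| by apply: eq_card => m; rewrite inE.
by rewrite scaler_nat -(sumr_const [pred m | h m == s]).
Qed.

Lemma sum_by_mul (T S : finType) (h : T -> S) (G : S -> algC) :
  (\sum_(m : T) G (h m) = \sum_(s : S) (#|[set m | h m == s]|)%:R * G s)%R.
Proof.
rewrite (partition_big h predT) //=; apply: eq_bigr => s _.
rewrite (eq_bigr (fun _ => G s)); last by move=> m /eqP ->.
have -> : #|[set m | h m == s]| = #|[pred m | h m == s]| by apply: eq_card => m; rewrite inE.
by rewrite mulr_natl -(sumr_const [pred m | h m == s]).
Qed.

Section Aux.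
Variables (d : Order.disp_t) (P : finTBPOrderType d).
Variables (n : nat) (rk : P -> nat) (lam : P -> P -> nat).
Hypothesis n_gt0 : (0 < n)%N.
Hypothesis Hrk : graded_rank rk n.
Hypothesis HEL : SnEL n lam.

Local Open Scope order_scope.

Lemma covers_lt (x y : P) : covers x y -> x < y.
Proof. by case/andP. Qed.

Lemma rk_path (x : P) c : path (@covers _ P) x c -> rk (last x c) = (rk x + size c)%N.
Proof.
case: Hrk => _ _ Hc.
elim: c x => [|y c IH] x /=; first by rewrite addn0.
by case/andP=> cxy pc; rewrite IH // (Hc _ _ cxy) addSnnS.
Qed.

Lemma rk_le (x y : P) : x <= y -> (rk x <= rk y)%N.
Proof.
move=> xy; case: HEL => H1 _; case: (H1 x y xy) => c [/andP[pc /eqP lc] _ _ _].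
by rewrite -lc rk_path // leq_addr.
Qed.

Lemma rk_lt (x y : P) : x < y -> (rk x < rk y)%N.
Proof.
move=> xy; case: HEL => H1 _; case: (H1 x y (ltW xy)) => c [/andP[pc /eqP lc] _ _ _].
rewrite -lc rk_path //; case: c pc lc => [|z c] /=.
  by move=> _ e; rewrite e ltxx in xy.
by move=> _ _; rewrite addnS ltnS leq_addr.
Qed.

Definition ch (m : mchain P n) (j : nat) : P := nth \bot (tval (val m)) j.

Lemma ch_tnth m (j : 'I_n.+1) : tnth (val m) j = ch m j.
Proof. by rewrite (tnth_nth \bot). Qed.

Lemma mch_prop m : [/\ ch m 0 = \bot, ch m n = \top &
   forall j, (j < n)%N -> covers (ch m j) (ch m j.+1)].
Proof.
have /and3P[/eqP h0 /eqP hn /forallP hc] := valP m; split.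
- by rewrite -(ch_tnth m ord0).
- by rewrite -(ch_tnth m ord_max).
move=> j hj; have := hc (Ordinal hj).
by rewrite !ch_tnth.
Qed.

Lemma ch0 m : ch m 0 = \bot. Proof. by case: (mch_prop m). Qed.
Lemma chn m : ch m n = \top. Proof. by case: (mch_prop m). Qed.
Lemma chS m j : (j < n)%N -> covers (ch m j) (ch m j.+1).
Proof. by case: (mch_prop m) => _ _; apply. Qed.

Lemma ch_rk m j : (j <= n)%N -> rk (ch m j) = j.
Proof.
case: Hrk => h0 _ Hc.
elim: j => [|j IH] hj; first by rewrite ch0.
by rewrite (Hc _ _ (chS m hj)) IH // ltnW.
Qed.

Lemma ch_le m i j : (i <= j <= n)%N -> ch m i <= ch m j.
Proof.
case/andP; elim: j => [|j IH] hij hj.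
  by move: hij; rewrite leqn0 => /eqP ->.
move: hij; rewrite leq_eqVlt => /orP[/eqP -> //|hij].
apply: le_trans (IH _ (ltnW hj)) (ltW (covers_lt (chS m hj))).
by rewrite -ltnS.
Qed.

Lemma ch_lt m i j : (i < j <= n)%N -> ch m i < ch m j.
Proof.
case/andP=> hij hj.
apply: lt_le_trans (covers_lt (chS m (leq_trans hij hj))) (ch_le m _).
by rewrite hij hj.
Qed.

Lemma mch_eq m m' : (forall j, (j <= n)%N -> ch m j = ch m' j) -> m = m'.
Proof.
move=> H; apply/val_inj/eq_from_tnth => j.
by rewrite !ch_tnth H // -ltnS.
Qed.

Lemma mk_mch (s : seq P) : size s = n.+1 -> nth \bot s 0 = \bot ->
  nth \bot s n = \top -> (forall j, (j < n)%N -> covers (nth \bot s j) (nth \bot s j.+1)) ->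
  exists m : mchain P n, forall j, ch m j = nth \bot s j.
Proof.
move=> hs h0 hn hc.
have hs' : size s == n.+1 by rewrite hs.
pose t := Tuple hs'.
have ht : maxchainb t.
  apply/and3P; split.
  - by rewrite (tnth_nth \bot) /= h0.
  - by rewrite (tnth_nth \bot) /= hn.
  apply/forallP => j; rewrite !(tnth_nth \bot) /=; exact: hc.
by exists (exist _ t ht).
Qed.

Definition lab m j := lam (ch m j) (ch m j.+1).

Lemma mlabE m (j : 'I_n) : mlab lam m j = lab m j.
Proof. by rewrite /mlab !ch_tnth. Qed.

Lemma nth_labs m i : (i < n)%N ->
  nth 0%N [seq mlab lam m j | j <- enum 'I_n] i = lab m i.
Proof.
by move=> hi; rewrite (nth_map (Ordinal n_gt0)) ?size_enum_ord // mlabE nth_enum_ord.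
Qed.

Lemma has_descentE m (i : 'I_n.-1) : has_descent lam i m = (lab m i.+1 < lab m i)%N.
Proof.
have hi : (i.+1 < n)%N by have := ltn_ord i; move: n_gt0; lia.
by rewrite /has_descent !nth_labs // ltnW.
Qed.

Lemma mch_seq m : exists s, [/\ tval (val m) = \bot :: s, size s = n,
   is_mchain \bot \top s & labels lam \bot s = [seq lab m j | j <- iota 0 n]].
Proof.
have e : tval (val m) = \bot :: behead (val m).
  by move: (ch0 m) (size_tuple (val m)); rewrite /ch; case: (tval (val m)) => //= x s ->.
have hs : size (behead (val m)) = n by rewrite size_behead size_tuple.
exists (behead (val m)); split => //.
- apply/andP; split.
    apply/(pathP \bot) => i hi; rewrite -e.
    have -> : nth \bot (behead (val m)) i = ch m i.+1 by rewrite /ch e.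
    by apply: chS; rewrite -hs.
  by rewrite (last_nth \bot) -e hs -(chn m).
apply: (@eq_from_nth _ 0%N); first by rewrite size_pairmap size_map size_iota.
move=> i; rewrite size_pairmap hs => hi.
rewrite (nth_pairmap \bot) ?hs // (nth_map 0%N) ?size_iota // nth_iota // add0n -e.
by rewrite /lab /ch e.
Qed.

Lemma labsum m m' : (\sum_(0 <= j < n) lab m j = \sum_(0 <= j < n) lab m' j)%N.
Proof.
have H : forall m, (\sum_(0 <= j < n) lab m j = \sum_(x <- iota 1 n) x)%N.
  move=> m0; have [s [_ _ hm hl]] := mch_seq m0.
  have hp := HEL.2 s hm; rewrite hl in hp.
  have -> : (\sum_(0 <= j < n) lab m0 j = \sum_(x <- [seq lab m0 j | j <- iota 0 n]) x)%N.
    by rewrite big_map /index_iota subn0.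
  exact: perm_big hp.
by rewrite !H.
Qed.

Definition phi m := (\sum_(0 <= j < n) j * lab m j)%N.

Lemma split_sum (F : nat -> nat) i : (i.+1 < n)%N ->
  (\sum_(0 <= j < n) F j = \sum_(0 <= j < i) F j + F i + F i.+1 + \sum_(i.+2 <= j < n) F j)%N.
Proof.
move=> hi; rewrite (@big_cat_nat _ _ _ i) //=; last by rewrite ltnW // ltnW.
rewrite (@big_ltn _ _ _ i n); last by lia.
by rewrite (@big_ltn _ _ _ i.+1 n) // !addnA.
Qed.

Lemma phi_step m m' i : (i.+1 < n)%N ->
  (forall j, (j <= n)%N -> j != i.+1 -> ch m j = ch m' j) ->
  (lab m i.+1 < lab m i)%N -> (lab m' i <= lab m' i.+1)%N -> (phi m < phi m')%N.
Proof.
move=> hi ag h1 h2.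
have el : forall j, (j < n)%N -> j != i -> j != i.+1 -> lab m j = lab m' j.
  move=> j hj n1 n2; rewrite /lab (ag j) ?(ag j.+1) //; lia.
have hs := labsum m m'.
rewrite !(split_sum _ hi) in hs; rewrite /phi !(split_sum _ hi).
have e1 : (\sum_(0 <= j < i) lab m j = \sum_(0 <= j < i) lab m' j)%N.
  apply: eq_big_nat => j /andP[_ hj]; apply: el; try lia.
have e2 : (\sum_(i.+2 <= j < n) lab m j = \sum_(i.+2 <= j < n) lab m' j)%N.
  apply: eq_big_nat => j /andP[hj hj']; apply: el; try lia.
have e3 : (\sum_(0 <= j < i) j * lab m j = \sum_(0 <= j < i) j * lab m' j)%N.
  apply: eq_big_nat => j /andP[_ hj]; rewrite el //; lia.
have e4 : (\sum_(i.+2 <= j < n) j * lab m j = \sum_(i.+2 <= j < n) j * lab m' j)%N.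
  apply: eq_big_nat => j /andP[hj hj']; rewrite el //; lia.
rewrite e1 e2 in hs; rewrite e3 e4.
move: hs h1 h2; set a := lab m i; set b := lab m i.+1; set a' := lab m' i; set b' := lab m' i.+1.
move=> hs h1 h2.
have hab : (a + b = a' + b')%N by lia.
have hb : (b < b')%N by lia.
have -> : (i.+1 * b = i * b + b)%N by rewrite mulSn addnC.
have -> : (i.+1 * b' = i * b' + b')%N by rewrite mulSn addnC.
have : (i * a + i * b = i * a' + i * b')%N by rewrite -!mulnDr hab.
lia.
Qed.

Definition seg m a b := [seq ch m r | r <- iota a.+1 (b - a)].

Lemma seg_prop m k a : (a + k <= n)%N ->
  [/\ path (@covers _ P) (ch m a) [seq ch m r | r <- iota a.+1 k],
      last (ch m a) [seq ch m r | r <- iota a.+1 k] = ch m (a + k) &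
      labels lam (ch m a) [seq ch m r | r <- iota a.+1 k] = [seq lab m r | r <- iota a k]].
Proof.
elim: k a => [|k IH] a hk /=; first by rewrite addn0.
have hk' : (a.+1 + k <= n)%N by lia.
have [h1 h2 h3] := IH a.+1 hk'.
split.
- by rewrite h1 andbT; apply: chS; lia.
- by rewrite h2 addSnnS.
by rewrite /labels /= -/(labels _ _ _) h3.
Qed.

Lemma sorted_iota (F : nat -> nat) a k :
  (forall r, (a <= r)%N -> (r.+1 < a + k)%N -> (F r <= F r.+1)%N) ->
  sorted leq [seq F r | r <- iota a k].
Proof.
elim: k a => [|k IH] a H //=.
case: k IH H => [|k] IH H //=.
have := IH a.+1; case: k IH H => [|k] IH H /=.
  by move=> _; rewrite andbT; apply: H => //; lia.
move=> h; rewrite (H a) //=; last by lia.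
apply: h => r h1 h2; apply: H; lia.
Qed.

Lemma el_uniq m m' a b : (a <= b <= n)%N -> ch m a = ch m' a -> ch m b = ch m' b ->
  (forall r, (a <= r)%N -> (r.+2 <= b)%N -> (lab m r <= lab m r.+1)%N) ->
  (forall r, (a <= r)%N -> (r.+2 <= b)%N -> (lab m' r <= lab m' r.+1)%N) ->
  forall r, (a <= r <= b)%N -> ch m r = ch m' r.
Proof.
move=> /andP[hab hbn] ea eb s1 s2.
case: HEL => H1 _.
have hl : ch m a <= ch m b by apply: ch_le; rewrite hab hbn.
have [c [_ _ hu _]] := H1 _ _ hl.
have segok : forall mm, ch mm a = ch m a -> ch mm b = ch m b ->
    (forall r, (a <= r)%N -> (r.+2 <= b)%N -> (lab mm r <= lab mm r.+1)%N) ->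
    seg mm a b = c.
  move=> mm ea' eb' smm.
  have hk : (a + (b - a) <= n)%N by lia.
  have [p1 p2 p3] := seg_prop mm hk.
  apply: hu.
    rewrite -ea' -eb' /is_mchain p1 /= /seg p2 subnKC //.
  rewrite -ea' /seg p3; apply: sorted_iota => r h1 h2; apply: smm => //; lia.
have es : seg m a b = seg m' a b.
  by rewrite (segok m) // (segok m') // ?ea ?eb.
move=> r /andP[h1 h2].
case: (eqVneq r a) => [-> //|hra].
have hr : (r - a.+1 < b - a)%N by lia.
have := congr1 (fun s => nth \bot s (r - a.+1)) es; rewrite /= /seg.
rewrite !(nth_map 0%N) ?size_iota // nth_iota //.
by have -> : (a.+1 + (r - a.+1) = r)%N by lia.
Qed.


Lemma el_fix m i : (i.+1 < n)%N -> exists m',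
  (forall j, (j <= n)%N -> j != i.+1 -> ch m' j = ch m j) /\ (lab m' i <= lab m' i.+1)%N.
Proof.
move=> hi.
have hl : ch m i <= ch m i.+2 by apply: ch_le; lia.
have [c [/andP[pc /eqP lc] sc _ _]] := HEL.1 _ _ hl.
have sz : size c = 2.
  have := rk_path pc; rewrite lc !ch_rk; lia.
case: c pc lc sc sz => [|y [|z [|]]] //= /and3P[cxy cyz _] ez /andP[sxyz _] _.
pose s := set_nth \bot (tval (val m)) i.+1 y.
have hs1 : nth \bot s i.+1 = y by rewrite nth_set_nth /= eqxx.
have hs2 : forall j, j != i.+1 -> nth \bot s j = ch m j.
  by move=> j hj; rewrite nth_set_nth /= (negbTE hj).
have [m' hm'] : exists m' : mchain P n, forall j, ch m' j = nth \bot s j.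
  apply: mk_mch.
  - rewrite size_set_nth size_tuple; apply/maxn_idPr; lia.
  - by rewrite hs2 ?ch0.
  - rewrite hs2 ?chn //; lia.
  move=> j hj.
  case: (eqVneq j i) => [->|hji].
    rewrite hs1 hs2 //; lia.
  case: (eqVneq j i.+1) => [->|hji1].
    rewrite hs1 hs2 -?ez //; lia.
  rewrite !hs2 ?eqSS //; exact: chS.
exists m'; split.
  by move=> j _ hj; rewrite hm' hs2.
rewrite /lab !hm' hs1 !hs2 -?ez //; lia.
Qed.

Lemma agreeP (i : 'I_n.-1) m m' :
  agree_except i m m' = [forall j : 'I_n.+1, (val j != i.+1) ==> (ch m j == ch m' j)].
Proof. by apply: eq_forallb => j; rewrite !ch_tnth. Qed.

Lemma agreeE (i : 'I_n.-1) m m' : agree_except i m m' ->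
  forall j, (j <= n)%N -> j != i.+1 -> ch m j = ch m' j.
Proof.
rewrite agreeP => /forallP H j hj hji.
by have /implyP /(_ hji) /eqP := H (Ordinal (hj : (j < n.+1)%N)).
Qed.

Lemma agreeI (i : 'I_n.-1) m m' :
  (forall j, (j <= n)%N -> j != i.+1 -> ch m j = ch m' j) -> agree_except i m m'.
Proof.
move=> H; rewrite agreeP; apply/forallP => j; apply/implyP => hj.
by rewrite H // -ltnS.
Qed.

Lemma ltn_pred_ord (i : 'I_n.-1) : (i.+1 < n)%N.
Proof. by have := ltn_ord i; move: n_gt0; lia. Qed.

Lemma Uop_nodesc m (i : 'I_n.-1) : ~~ has_descent lam i m -> Uop lam i m = m.
Proof.
rewrite has_descentE -leqNgt => hd.
have hi := ltn_pred_ord i.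
rewrite /Uop; case: pickP => [m' /andP[ag nd] | _] //=.
rewrite has_descentE -leqNgt in nd.
have ag' := agreeE ag.
apply: mch_eq => j hj; case: (eqVneq j i.+1) => [->|hji]; last by rewrite ag'.
symmetry; apply: (el_uniq (a:=i) (b:=i.+2)).
- lia.
- by rewrite ag' //; lia.
- by rewrite ag' //; lia.
- by move=> r h1 h2; have -> : r = i by lia.
- by move=> r h1 h2; have -> : r = i by lia.
- lia.
Qed.

Lemma Uop_desc m (i : 'I_n.-1) : has_descent lam i m ->
  Uop lam i m != m /\ (phi m < phi (Uop lam i m))%N.
Proof.
move=> hd.
have hi := ltn_pred_ord i.
rewrite /Uop; case: pickP => [m' /andP[ag nd] | H] /=.
  split; first by apply: contraNneq nd => ->.
  rewrite has_descentE -leqNgt in nd; rewrite has_descentE in hd.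
  apply: (phi_step hi) => //; move=> j hj hji; exact: agreeE ag j hj hji.
exfalso.
rewrite has_descentE in hd.
have [m' [h1 h2]] := el_fix m hi.
have := H m'; rewrite agreeI /=; last by move=> j hj hji; rewrite h1.
by rewrite has_descentE -leqNgt h2.
Qed.

Lemma Uop_eq m (i : 'I_n.-1) : (Uop lam i m == m) = ~~ has_descent lam i m.
Proof.
case hd: (has_descent lam i m) => /=.
  by have [/negbTE -> _] := Uop_desc hd.
by rewrite Uop_nodesc ?hd ?eqxx.
Qed.

Local Open Scope ring_scope.

Definition phiI (a : 'I_#|{: mchain P n}|) := phi (enum_val a).

Definition tri (A : 'M[algC]_#|{: mchain P n}|) :=
  forall a b, A a b != 0 -> a = b \/ (phiI b < phiI a)%N.

Lemma triM A B : tri A -> tri B ->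
  tri (A *m B) /\ forall a, (A *m B) a a = A a a * B a a.
Proof.
move=> tA tB; split.
  move=> a b; rewrite mxE => nz.
  case: (pickP (fun c => A a c * B c b != 0)) => [c hc | h0]; last first.
    have e0 : \sum_c A a c * B c b = 0.
      by apply: big1 => c _; apply/eqP; exact: negbFE (h0 c).
    by rewrite e0 eqxx in nz.
  move: hc; rewrite /= mulf_eq0 negb_or => /andP[h1 h2].
  case: (tA _ _ h1) => [e1|l1]; case: (tB _ _ h2) => [e2|l2].
  - by left; rewrite e1.
  - by right; rewrite e1.
  - by right; rewrite -e2.
  - by right; apply: ltn_trans l2 l1.
move=> a; rewrite mxE (bigD1 a) //= big1 ?addr0 // => c hc.
apply/eqP; rewrite mulf_eq0; apply/negPn/negP; rewrite negb_or => /andP[h1 h2].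
case: (tA _ _ h1) => [e1|l1]; first by rewrite e1 eqxx in hc.
case: (tB _ _ h2) => [e2|l2]; first by rewrite e2 eqxx in hc.
by have := ltn_trans l1 l2; rewrite ltnn.
Qed.

Lemma tri1 : tri 1%:M.
Proof.
move=> a b; rewrite mxE; case: (boolP (a == b)) => [/eqP -> _|_]; first by left.
by rewrite eqxx.
Qed.

Lemma triT (i : 'I_n.-1) : tri (Tmx lam i).
Proof.
move=> a b; rewrite mxE; case: ifP => [/eqP hU _|_]; last by rewrite eqxx.
case: (eqVneq a b) => [->|hab]; first by left.
right; have hne : enum_val a != enum_val b.
  by apply: contra hab => /eqP /enum_val_inj ->.
have hd : has_descent lam i (enum_val b).
  by rewrite -[has_descent _ _ _]negbK -Uop_eq hU.
by have [_] := Uop_desc hd; rewrite hU.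
Qed.

Lemma repW_tri (w : seq 'I_n.-1) : tri (repW lam w) /\
  forall a, repW lam w a a = \prod_(i <- w) Tmx lam i a a.
Proof.
elim: w => [|i w [t1 t2]] /=.
  by split; [exact: tri1 | move=> a; rewrite big_nil mxE eqxx].
have [t3 t4] := triM (@triT i) t1; split => // a.
by rewrite t4 t2 big_cons.
Qed.

Lemma trace_repW (w : seq 'I_n.-1) : \tr (repW lam w) =
  \sum_(m : mchain P n) \prod_(i <- w) (if has_descent lam i m then 0 else -1).
Proof.
rewrite /mxtrace; under eq_bigr => a _ do rewrite (repW_tri w).2.
rewrite [RHS](big_enum_val (A := predT)) /=.
apply: eq_bigr => a _; apply: eq_bigr => i _.
by rewrite mxE Uop_eq; case: has_descent.
Qed.

Definition o0 : 'I_n := Ordinal n_gt0.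
Definition toI r : 'I_n := nth o0 (enum 'I_n) r.
Lemma val_toI r : (r < n)%N -> val (toI r) = r.
Proof. by move=> hr; exact: nth_enum_ord. Qed.
Lemma toI_val (i : 'I_n) : toI i = i.
Proof. by apply: val_inj; rewrite val_toI. Qed.

Definition Des m : {set 'I_n.-1} := [set i | has_descent lam i m].

Section PartOne.
Variable N : nat.

Definition fn (f : {ffun 'I_n -> 'I_N}) r := val (f (toI r)).
Definition cnt f j := count (fun r => fn f r < j)%N (iota 0 n).
Definition Cd m (f : {ffun 'I_n -> 'I_N}) :=
  [forall j : 'I_n, forall j' : 'I_n,
     (val j' == (val j).+1) ==>
     (if [exists i in Des m, val i == val j] then (f j < f j')%N
      else (f j <= f j')%N)].

Lemma Cd_step m f : Cd m f -> forall r, (r.+1 < n)%N ->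
  (fn f r <= fn f r.+1)%N /\ ((lab m r.+1 < lab m r)%N -> (fn f r < fn f r.+1)%N).
Proof.
move=> /forallP H r hr.
have /forallP/(_ (toI r.+1)) := H (toI r).
rewrite (val_toI hr) (val_toI (ltnW hr)) eqxx implyTb.
case: ifP => [_ h|hn h]; first by split => //; exact: ltnW.
split => // hd; exfalso; move/negbT/negP: hn; apply; apply/existsP.
have hr' : (r < n.-1)%N by lia.
exists (Ordinal hr'); rewrite inE has_descentE /=; apply/andP; split => //.
Qed.

Lemma Cd_intro m f : (forall r, (r.+1 < n)%N ->
  (fn f r <= fn f r.+1)%N /\ ((lab m r.+1 < lab m r)%N -> (fn f r < fn f r.+1)%N)) ->
  Cd m f.
Proof.
move=> H; apply/forallP => j; apply/forallP => j'; apply/implyP => /eqP hj.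
have hr : ((val j).+1 < n)%N by rewrite -hj ltn_ord.
have [h1 h2] := H _ hr.
have e1 : fn f j = f j by rewrite /fn toI_val.
have e2 : fn f (val j).+1 = f j' by rewrite /fn -hj toI_val.
rewrite e1 e2 in h1 h2.
case: ifP => // /existsP [i /andP[hi /eqP hij]].
by apply: h2; move: hi; rewrite inE has_descentE hij.
Qed.

Lemma fn_mono m f : Cd m f -> forall r r', (r <= r')%N -> (r' < n)%N -> (fn f r <= fn f r')%N.
Proof.
move=> hc r; elim=> [|r' IH] h1 h2; first by move: h1; rewrite leqn0 => /eqP ->.
move: h1; rewrite leq_eqVlt => /orP[/eqP -> //|h1].
apply: leq_trans (IH _ (ltnW h2)) (Cd_step hc h2).1; by rewrite -ltnS.
Qed.

Lemma cnt_lt m f : Cd m f -> forall j r, (r < n)%N -> (fn f r < j)%N = (r < cnt f j)%N.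
Proof.
move=> hc j; apply: prefix_count => r r' h1 h2 h3.
by apply: leq_ltn_trans (fn_mono hc h1 h2) h3.
Qed.

Lemma cnt_le f j : (cnt f j <= n)%N.
Proof. by have := count_size (fun r => fn f r < j)%N (iota 0 n); rewrite size_iota. Qed.

Lemma cnt0 f : cnt f 0 = 0%N.
Proof. by rewrite /cnt (eq_count (a2 := pred0)) ?count_pred0. Qed.

Lemma cnt_mono f j j' : (j <= j')%N -> (cnt f j <= cnt f j')%N.
Proof. by move=> h; apply: sub_count => r /= h'; apply: leq_trans h' h. Qed.

Lemma fn_last_lt m f k : Cd m f -> fn f n.-1 = k.-1 -> (0 < k)%N ->
  forall r, (r < n)%N -> (fn f r < k)%N.
Proof.
move=> hc hl hk r hr.
have h1 : (r <= n.-1)%N by lia.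
have h2 : (n.-1 < n)%N by lia.
have := fn_mono hc h1 h2; rewrite hl; lia.
Qed.

Lemma cnt_k m f k : Cd m f -> fn f n.-1 = k.-1 -> (0 < k)%N -> cnt f k = n.
Proof.
move=> hc hl hk; rewrite /cnt -[in RHS](size_iota 0 n) -count_predT.
apply: eq_in_count => r; rewrite mem_iota => /andP[_ hr] /=.
exact: fn_last_lt hc hl hk r hr.
Qed.

Lemma cnt_km1 m f k : Cd m f -> fn f n.-1 = k.-1 -> (0 < k)%N -> (cnt f k.-1 < n)%N.
Proof.
move=> hc hl hk; have hn : (n.-1 < n)%N by lia.
have := cnt_lt hc k.-1 hn; rewrite hl ltnn => /esym/negbT; rewrite -leqNgt.
lia.
Qed.

Lemma cnt_eq f j : count (fun r => fn f r == j) (iota 0 n) = (cnt f j.+1 - cnt f j)%N.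
Proof.
rewrite /cnt.
have := count_predUI (fun r => fn f r < j)%N (fun r => fn f r == j) (iota 0 n).
rewrite (eq_count (a1 := predI _ _) (a2 := pred0)); last first.
  by move=> r /=; case: ltngtP.
rewrite (eq_count (a1 := predU _ _) (a2 := fun r => fn f r < j.+1)%N); last first.
  by move=> r /=; rewrite ltnS; case: ltngtP.
rewrite count_pred0 addn0 => ->; lia.
Qed.

Definition gmap (k : nat) (f : {ffun 'I_n -> 'I_N}) m : {ffun 'I_k.+1 -> P} :=
  [ffun j : 'I_k.+1 => ch m (cnt f j)].
Definition valid (k : nat) m f := Cd m f && (fn f n.-1 == k.-1).

Lemma gmap_mc k m f : (0 < k)%N -> valid k m f -> multichainb (gmap k f m).
Proof.
move=> hk /andP[hc /eqP hl]; apply/and4P; split.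
- by rewrite ffunE /= cnt0 ch0.
- by rewrite ffunE /= (cnt_k hc hl hk) chn.
- apply/forallP => j; rewrite !ffunE lift0 /=; apply: ch_le.
  by rewrite cnt_le andbT cnt_mono.
rewrite !ffunE /= inordK; last by lia.
apply: ch_lt; rewrite (cnt_k hc hl hk) leqnn andbT.
exact: cnt_km1 hc hl hk.
Qed.

Lemma valid_block k m f : (0 < k)%N -> valid k m f ->
  forall J r, (J < k)%N -> (cnt f J <= r)%N -> (r.+2 <= cnt f J.+1)%N ->
  (lab m r <= lab m r.+1)%N.
Proof.
move=> hk /andP[hc /eqP hl] J r hJ h1 h2.
have hr : (r.+1 < n)%N by have := cnt_le f J.+1; lia.
have e1 := cnt_lt hc J (ltnW hr).
have e2 := cnt_lt hc J.+1 hr.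
have m1 := (Cd_step hc hr).1.
rewrite leqNgt; apply/negP => hd.
have := (Cd_step hc hr).2 hd.
have f1 : ~~ (fn f r < J)%N by rewrite e1 -leqNgt.
have f2 : (fn f r.+1 < J.+1)%N by rewrite e2; lia.
move: f1 f2; rewrite -leqNgt; lia.
Qed.

Lemma gmapE k f m (j : nat) : (j <= k)%N -> gmap k f m (inord j) = ch m (cnt f j).
Proof. by move=> hj; rewrite ffunE inordK. Qed.

Lemma valid_uniq k m f m' f' : (0 < k)%N -> valid k m f -> valid k m' f' ->
  gmap k f m = gmap k f' m' -> m = m' /\ f = f'.
Proof.
move=> hk v1 v2 eg.
have hg : forall j, (j <= k)%N -> ch m (cnt f j) = ch m' (cnt f' j).
  by move=> j hj; rewrite -(gmapE f m hj) -(gmapE f' m' hj) eg.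
have hcnt : forall j, (j <= k)%N -> cnt f j = cnt f' j.
  by move=> j hj; rewrite -(ch_rk m (cnt_le f j)) hg // ch_rk // cnt_le.
case/andP: (v1) => hc1 /eqP hl1; case/andP: (v2) => hc2 /eqP hl2.
have hfn : forall r, (r < n)%N -> fn f r = fn f' r.
  move=> r hr.
  have l1 := fn_last_lt hc1 hl1 hk hr; have l2 := fn_last_lt hc2 hl2 hk hr.
  apply/eqP; rewrite eqn_leq; apply/andP; split.
    by rewrite -ltnS (cnt_lt hc1) // hcnt // -(cnt_lt hc2).
  by rewrite -ltnS (cnt_lt hc2) // -hcnt // -(cnt_lt hc1).
have ef : f = f'.
  by apply/ffunP => i; apply: val_inj; have := hfn i (ltn_ord i); rewrite /fn toI_val.
split => //.
apply: mch_eq => j hj.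
move: hj; rewrite leq_eqVlt => /orP[/eqP ->|hj]; first by rewrite !chn.
set J := fn f j.
have hJ : (J < k)%N := fn_last_lt hc1 hl1 hk hj.
have a1 : (cnt f J <= j)%N by rewrite leqNgt -(cnt_lt hc1) // ltnn.
have a2 : (j < cnt f J.+1)%N by rewrite -(cnt_lt hc1) // ltnS.
apply: (el_uniq (a := cnt f J) (b := cnt f J.+1)).
- by rewrite cnt_mono // cnt_le.
- by rewrite hg ?hcnt //; lia.
- by rewrite hg ?hcnt //; lia.
- by move=> r h1 h2; exact: valid_block hk v1 J r hJ h1 h2.
- move=> r; rewrite !hcnt //; last lia.
  by move=> h1 h2; exact: valid_block hk v2 J r hJ h1 h2.
by rewrite a1 ltnW.
Qed.

End PartOne.

Lemma glue (x : P) (ts : seq P) : path <=%O x ts ->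
  exists c, [/\ path (@covers _ P) x c, last x c = last x ts &
             all (fun y => y \in x :: c) ts].
Proof.
elim: ts x => [|y ts IH] x /=; first by move=> _; exists [::].
case/andP=> hxy hp.
have [c1 [/andP[p1 /eqP l1] _ _ _]] := HEL.1 _ _ hxy.
have [c2 [p2 l2 a2]] := IH y hp.
exists (c1 ++ c2); split.
- by rewrite cat_path p1 l1.
- by rewrite last_cat l1.
have hy : y \in x :: c1 ++ c2 by rewrite -cat_cons mem_cat -l1 mem_last.
rewrite hy /=; apply/allP => z hz.
have := allP a2 z hz; rewrite inE => /orP[/eqP ->//|].
by rewrite -cat_cons mem_cat => ->; rewrite orbT.
Qed.

Lemma mem_ch (s : seq P) (m : mchain P n) : (forall j, ch m j = nth \bot s j) -> size s = n.+1 ->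
  forall y, y \in s -> ch m (rk y) = y.
Proof.
move=> hm hs y hy.
have hi : (index y s <= n)%N by rewrite -ltnS -hs index_mem.
have e : ch m (index y s) = y by rewrite hm nth_index.
by rewrite -{1}e ch_rk.
Qed.

Section PartOneB.
Variable N : nat.

Lemma exists_valid (k : nat) (t : {ffun 'I_k.+1 -> P}) : (0 < k)%N -> (k <= N)%N ->
  multichainb t -> exists m (f : {ffun 'I_n -> 'I_N}), valid k m f /\ gmap k f m = t.
Proof.
move=> hk hkN /and4P[/eqP t0 /eqP tk /forallP tm tl].
pose c j := rk (t (inord j)).
have c0 : c 0%N = 0%N.
  rewrite /c; have -> : (inord 0 : 'I_k.+1) = ord0 by apply: val_inj; rewrite /= inordK.
  by case: Hrk => h0 _ _; rewrite t0.
have tK : t (inord k) = \top.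
  by have -> : (inord k : 'I_k.+1) = ord_max by apply: val_inj; rewrite /= inordK.
have ck : c k = n by case: Hrk => _ hn _; rewrite /c tK.
have tS : forall j, (j < k)%N -> (t (inord j) <= t (inord j.+1))%O.
  move=> j hj; have := tm (Ordinal hj).
  have -> : widen_ord (leqnSn k) (Ordinal hj) = inord j.
    by apply: val_inj; rewrite /= inordK //; lia.
  have -> : lift ord0 (Ordinal hj) = inord j.+1.
    by apply: val_inj; rewrite /= inordK.
  done.
have tle : forall j j', (j <= j')%N -> (j' <= k)%N -> (t (inord j) <= t (inord j'))%O.
  move=> j; elim=> [|j' IH] h1 h2; first by move: h1; rewrite leqn0 => /eqP ->.
  move: h1; rewrite leq_eqVlt => /orP[/eqP -> //|h1].
  by apply: le_trans (IH _ (ltnW h2)) (tS _ h2); rewrite -ltnS.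
have cmono : forall j j', (j <= j')%N -> (j' <= k)%N -> (c j <= c j')%N.
  by move=> j j' h1 h2; apply: rk_le; apply: tle.
have ckm1 : (c k.-1 < n)%N.
  by rewrite -ck; apply: rk_lt; rewrite tK -tk.
have t0' : t (inord 0) = \bot.
  by have -> : (inord 0 : 'I_k.+1) = ord0 by apply: val_inj; rewrite /= inordK.
have tj : forall j : 'I_k.+1, t j = t (inord j) by move=> j; rewrite inord_val.
have [m0 hm0] : exists m0 : mchain P n, [forall j : 'I_k.+1, ch m0 (rk (t j)) == t j].
  pose ts := [seq t (inord j) | j <- iota 1 k].
  have hnth : forall i, (i <= k)%N -> nth \bot (\bot :: ts) i = t (inord i).
    case=> [|i] hi //=.
    by rewrite (nth_map 0%N) ?size_iota // nth_iota.
  have hp : path <=%O \bot ts.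
    apply/(pathP \bot) => i; rewrite size_map size_iota => hi.
    rewrite hnth ?(ltnW hi) //.
    have -> : nth \bot ts i = nth \bot (\bot :: ts) i.+1 by [].
    by rewrite hnth //; apply: tS.
  have [cc [pc lc ac]] := glue hp.
  have lts : last \bot ts = \top.
    by rewrite (last_nth \bot) hnth size_map size_iota // tK.
  have scc : size cc = n.
    have := rk_path pc; rewrite lc lts; case: Hrk => -> -> _ //.
  have [m0 hm0] : exists m0 : mchain P n, forall j, ch m0 j = nth \bot (\bot :: cc) j.
    apply: mk_mch => //=; first by rewrite scc.
    - by rewrite -scc -last_nth lc lts.
    move=> j hj; have := (pathP \bot pc) j; rewrite scc => /(_ hj) //.
  exists m0; apply/forallP => j; apply/eqP; apply: (mem_ch hm0); first by rewrite /= scc.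
  case: (posnP j) => [hj0|hj0].
    have -> : j = ord0 by apply: val_inj.
    by rewrite t0 mem_head.
  apply: (allP ac).
  by rewrite tj; apply: map_f; rewrite mem_iota hj0 /= add1n ltnS -ltnS ltn_ord.
pose pass (m : mchain P n) := [forall j : 'I_k.+1, ch m (rk (t j)) == t j].
case: (@arg_maxnP _ m0 pass phi hm0) => m hpm hmax.
have hpc : forall j, (j <= k)%N -> ch m (c j) = t (inord j).
  by move=> j hj; apply/eqP; exact: (forallP hpm (inord j)).
have hblk : forall J r, (J < k)%N -> (c J <= r)%N -> (r.+2 <= c J.+1)%N ->
    (lab m r <= lab m r.+1)%N.
  move=> J r hJ h1 h2; rewrite leqNgt; apply/negP => hd.
  have hr : (r.+1 < n)%N by have := cmono J.+1 k hJ (leqnn k); lia.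
  have [m' [a1 a2]] := el_fix m hr.
  have lt := phi_step hr (fun j hj hji => esym (a1 j hj hji)) hd a2.
  have hp' : pass m'.
    apply/forallP => j; rewrite a1.
    - exact: (forallP hpm j).
    - by rewrite tj -ck; apply: cmono; rewrite // -ltnS.
    rewrite tj; change (c j != r.+1); case: (leqP j J) => hjJ.
      by have := cmono j J hjJ (ltnW hJ); lia.
    by have := cmono J.+1 j hjJ (ltn_ord j : (j <= k)%N); lia.
  by have := hmax m' hp'; lia.
pose fv r := count (fun J => c J.+1 <= r)%N (iota 0 k).
have CL : forall r j, (r < n)%N -> (j <= k)%N -> (fv r < j)%N = (r < c j)%N.
  move=> r j hr hj.
  have pc : forall J, (J < k)%N -> (c J.+1 <= r)%N = (J < fv r)%N.
    apply: (prefix_count (q := fun J => c J.+1 <= r)%N).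
    move=> a b hba hak h; apply: leq_trans (cmono b.+1 a.+1 _ _) h => //.
  case: j hj => [|j] hj; first by rewrite c0 ltn0.
  by rewrite ltnS leqNgt -(pc j) // -ltnNge.
have fvk : forall r, (r < n)%N -> (fv r < k)%N by move=> r hr; rewrite CL // ck.
have hN : (0 < N)%N by lia.
have [f hfn] : exists f : {ffun 'I_n -> 'I_N}, forall r, (r < n)%N -> fn f r = fv r.
  exists [ffun i : 'I_n => insubd (Ordinal hN) (fv i)] => r hr.
  rewrite /fn ffunE val_toI // val_insubd.
  by rewrite (leq_trans (fvk r hr) hkN).
have hcnt : forall j, (j <= k)%N -> cnt f j = c j.
  move=> j hj; rewrite /cnt (eq_in_count (a2 := fun r => r < c j)%N).
    by apply: count_lt_iota; rewrite -ck; apply: cmono.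
  by move=> r; rewrite mem_iota => /andP[_ hr] /=; rewrite hfn // CL.
have hv : valid k m f.
  rewrite /valid; apply/andP; split.
    apply: Cd_intro => r hr; rewrite (hfn r (ltnW hr)) (hfn r.+1 hr); split.
      by apply: sub_count => J /= h; apply: leq_trans h _.
    move=> hd; rewrite ltnNge; apply/negP => hle.
    have hJ : (fv r < k)%N := fvk r (ltnW hr).
    have e1 : (c (fv r) <= r)%N by rewrite leqNgt -CL ?ltnn // ltnW.
    have e2 : (r.+1 < c (fv r).+1)%N by rewrite -CL // ltnS.
    by have := hblk _ r hJ e1 e2; lia.
  have hn1 : (n.-1 < n)%N by lia.
  rewrite hfn //; apply/eqP.
  have a1 := fvk _ hn1.
  have a2 := CL _ k.-1 hn1 (leq_pred k).
  have a3 : (n.-1 < c k.-1)%N = false by apply/negbTE; rewrite -leqNgt; lia.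
  rewrite a3 in a2; move/negbT: a2; rewrite -leqNgt; lia.
exists m, f; split => //.
apply/ffunP => j; have hj : (j <= k)%N by rewrite -ltnS.
by rewrite ffunE hcnt // hpc // inord_val.
Qed.

Lemma count_index_enum (p : pred 'I_n) :
  count p (index_enum 'I_n) = count (fun r => p (toI r)) (iota 0 n).
Proof.
rewrite -size_filter deprecated_filter_index_enum /enum_mem size_filter -enumT.
rewrite -val_enum_ord count_map; apply: eq_count => x /=.
by rewrite toI_val.
Qed.

Lemma mono_eq (k : 'I_N.+1) m (f : {ffun 'I_n -> 'I_N}) : (0 < k)%N -> valid k m f ->
  \prod_(j < n) 'X_(f j) =
  \prod_(j < k) ('X_(varidx j) ^+ (rk (gmap k f m (lift ord0 j)) -
                                   rk (gmap k f m (widen_ord (leqnSn k) j)))%N)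
  :> {mpoly algC[N]}.
Proof.
move=> hk hv; case/andP: (hv) => hc /eqP hl.
have fk := fn_last_lt hc hl hk.
under [RHS]eq_bigr => j _ do rewrite !ffunE /= !ch_rk ?cnt_le // -cnt_eq.
rewrite (partition_big (fun r : 'I_n => f r) predT) //=.
under eq_bigr => i _.
  rewrite (eq_bigr (fun _ => 'X_i)); last by move=> r /= /eqP ->.
  rewrite big_const_seq iter_mulr_1.
  over.
rewrite (bigID (fun i : 'I_N => (i < k)%N)) /= [X in _ * X]big1 ?mulr1; last first.
  move=> i hi; rewrite count_index_enum.
  rewrite (eq_in_count (a2 := pred0)) ?count_pred0 ?expr0 //.
  move=> r; rewrite mem_iota => /andP[_ hr] /=; apply/negbTE/eqP => e.
  by have := fk r hr; rewrite /fn e => h; rewrite h in hi.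
have hkN : (k <= N)%N by rewrite -ltnS ltn_ord.
rewrite (big_ord_narrow hkN); apply: eq_bigr => j _.
have -> : widen_ord hkN j = varidx j by apply: val_inj.
by rewrite count_index_enum.
Qed.

End PartOneB.

Lemma inord_k_eq N (k : 'I_N.+1) (x : nat) : (0 < k)%N -> (x < N)%N ->
  ((inord x.+1 : 'I_N.+1) == k) = (x == k.-1).
Proof.
move=> hk hx; apply/eqP/eqP => [e|e].
  by have := congr1 val e; rewrite /= inordK //; lia.
by apply: val_inj; rewrite /= inordK //; lia.
Qed.

Lemma main_sec : exists (dF cP : {set 'I_n.-1} -> algC),
    [/\ (forall N : nat, FPtrunc rk N = \sum_(S : {set 'I_n.-1}) dF S *: Ltrunc n N S),
        (forall w : seq 'I_n.-1,
            \tr (repW lam w) = \sum_(S : {set 'I_n.-1}) cP S * chiS S w)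
      & (forall N : nat,
            \sum_(S : {set 'I_n.-1}) dF S *: Ltrunc n N (~: S)
            = \sum_(S : {set 'I_n.-1}) cP S *: Ltrunc n N S)].
Proof.
exists (fun S => (#|[set m : mchain P n | Des m == S]|)%:R),
       (fun S => (#|[set m : mchain P n | ~: Des m == S]|)%:R); split.
- move=> N.
  rewrite -(sum_by_scale Des (fun S => Ltrunc n N S)).
  transitivity (\sum_(m : mchain P n) \sum_(f : {ffun 'I_n -> 'I_N} | Cd m f) \prod_(j < n) 'X_(f j) : {mpoly algC[N]});
    last by [].
  rewrite pair_big_dep /=.
  rewrite (partition_big (fun p => (inord (fn p.2 n.-1).+1 : 'I_N.+1))
                         (fun k : 'I_N.+1 => (0 < k)%N)) /=; last first.
    by move=> p _; rewrite inordK // ltnS /fn ltn_ord.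
  rewrite /FPtrunc; apply: eq_bigr => k hk.
  have hkN : (k <= N)%N by rewrite -ltnS ltn_ord.
  rewrite (partition_big (fun p => gmap k p.2 p.1) (@multichainb _ P k)) /=; last first.
    move=> p /andP[hc he]; apply: gmap_mc => //; apply/andP; split => //.
    by rewrite -inord_k_eq // /fn ltn_ord.
  apply: eq_bigr => t ht.
  have [m0 [f0 [hv0 hg0]]] := exists_valid hk hkN ht.
  rewrite (big_pred1 (m0, f0)); first by rewrite (mono_eq hk hv0) hg0.
  move=> [m f] /=; apply/idP/idP => [/andP[/andP[hc he] /eqP hg]|/eqP [-> ->]].
    have hv : valid k m f.
      by apply/andP; split => //; rewrite -inord_k_eq // /fn ltn_ord.
    by have [-> ->] := valid_uniq hk hv hv0 (etrans hg (esym hg0)).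
  case/andP: (hv0) => hc he; rewrite hc hg0 eqxx andbT /=.
  by rewrite inord_k_eq // /fn ltn_ord.
- move=> w; rewrite trace_repW.
  rewrite -(sum_by_mul (fun m : mchain P n => ~: Des m) (fun S => chiS S w)).
  apply: eq_bigr => m _; rewrite /chiS; apply: eq_bigr => i _.
  by rewrite in_setC inE; case: has_descent.
move=> N.
rewrite -(sum_by_scale Des (fun S => Ltrunc n N (~: S))).
by rewrite -(sum_by_scale (fun m : mchain P n => ~: Des m) (Ltrunc n N)).
Qed.

End Aux.

Unset Implicit Arguments.
Local Open Scope ring_scope.

Theorem mainTheorem3 (d : Order.disp_t) (P : finTBPOrderType d) (n : nat)
    (rk : P -> nat) (lam : P -> P -> nat) :
  (0 < n)%N ->
  graded_rank rk n ->
  SnEL n lam ->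
  exists (dF cP : {set 'I_n.-1} -> algC),
    [/\ (* F_P = sum_S dF_S L_{S,n} *)
        (forall N : nat, FPtrunc rk N = \sum_(S : {set 'I_n.-1}) dF S *: Ltrunc n N S),
        (* chi_P = sum_S cP_S chi_S  (equality of traces on every word T_w) *)
        (forall w : seq 'I_n.-1,
            \tr (repW lam w) = \sum_(S : {set 'I_n.-1}) cP S * chiS S w)
      & (* omega F_P = ch(chi_P) *)
        (forall N : nat,
            \sum_(S : {set 'I_n.-1}) dF S *: Ltrunc n N (~: S)
            = \sum_(S : {set 'I_n.-1}) cP S *: Ltrunc n N S)].
Proof. by move=> hn hr he; exact: main_sec hn hr he. Qed.
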